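(* Let $n_1,n_2$ be distinct odd primes with $\gcd(n_1-1,n_2-1)=6$, $n=n_1n_2$, and let $D_0,\dots,D_5$ be the Whiteman generalized cyclotomic classes of order 6 modulo $n$ (see context). Let $q$ be a power of a prime $p$ with $\gcd(q,n)=1$ and let $\beta$ be a primitive $n$-th root of unity in an extension of $\mathrm{GF}(q)$. Let $N_1=\{n_1,2n_1,\dots,(n_2-1)n_1\}$ and $N_2=\{n_2,2n_2,\dots,(n_1-1)n_2\}$. Then for every $0\le j\le 5$, $$\sum_{i\in D_j}\beta^{ai}=\begin{cases}-\frac{n_1-1}{6}\bmod p, & a\in N_1,\\ -\frac{n_2-1}{6}\bmod p, & a\in N_2.\end{cases}$$
   Context: Let $e=(n_1-1)(n_2-1)/6$, $g$ a common primitive root of $n_1$ and $n_2$, $u$ an integer with $u\equiv g\pmod{n_1}$, $u\equiv 1\pmod{n_2}$, and $D_i=\{g^su^i\bmod n: s=0,\dots,e-1\}$ for $i=0,\dots,5$. An integer ''mod $p$'' denotes its image in the prime field $\mathrm{GF}(p)$. *)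

(* Defs.v *)
From HB Require Import structures.
From mathcomp Require Import all_boot all_order all_algebra all_field.
Set Implicit Arguments. Unset Strict Implicit. Unset Printing Implicit Defensive.
Import Order.TTheory GRing.Theory.

Definition primitive_root_mod (m g : nat) : bool :=
  coprime g m &&
  [forall k : 'I_(totient m), (0 < k) ==> (g ^ k %% m != 1 %% m)].

Definition whit_e (n1 n2 : nat) : nat := ((n1 - 1) * (n2 - 1)) %/ 6.

Definition whiteman_D (n1 n2 g u i : nat) : pred nat :=
  [pred x | [exists s : 'I_(whit_e n1 n2),
               x == (g ^ s * u ^ i) %% (n1 * n2)]].

Definition setN (n1 n2 : nat) : pred nat :=
  [pred a | [exists k : 'I_n2, (0 < k) && (a == k * n1)]].

(* Main.v *)
Require Import Defs.
From HB Require Import structures.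
From mathcomp Require Import all_boot all_order all_algebra all_field.
From mathcomp Require Import zify.
Import Order.TTheory GRing.Theory.


Lemma fermat P g : prime P -> coprime g P -> g ^ P.-1 = 1 %[mod P].
Proof. by move=> pP cg; rewrite -(totient_prime pP) cyclic.Euler_exp_totient. Qed.


Lemma expg_mod P g s : prime P -> coprime g P -> g ^ s = g ^ (s %% P.-1) %[mod P].
Proof.
move=> pP cg.
have ->: g ^ s = (g ^ P.-1) ^ (s %/ P.-1) * g ^ (s %% P.-1) by rewrite -expnM -expnD mulnC -divn_eq.
by rewrite -modnMml -modnXm fermat // modnXm exp1n modnMml mul1n.
Qed.


Lemma inj_mod P g r t : prime P -> primitive_root_mod P g -> r < P.-1 -> t < P.-1 ->
  g ^ r = g ^ t %[mod P] -> r = t.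
Proof.
move=> pP pr; have /andP[cg /forallP prim] := pr.
wlog le: r t / r <= t.
  move=> H rl tl e; case: (leqP r t) => h; first exact: H.
  by symmetry; apply: H => //; apply: ltnW.
move=> rl tl e; apply/eqP; rewrite eqn_leq le /= leqNgt; apply/negP => lt.
have kl : r + (P.-1 - t) < totient P by rewrite totient_prime //; clear -rl tl lt; lia.
have /implyP H := prim (Ordinal kl).
have k0 : 0 < Ordinal kl by rewrite /=; clear -rl tl lt; lia.
move: (H k0) => /negP; apply; apply/eqP => /=.
rewrite expnD -modnMml e modnMml -expnD subnKC ?fermat //; clear -tl; lia.
Qed.

Lemma mod_eq P g s t : prime P -> primitive_root_mod P g ->
  g ^ s = g ^ t %[mod P] -> s = t %[mod P.-1].
Proof.
move=> pP pr; have /andP[cg _] := pr.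
have m0 : 0 < P.-1 by have := prime_gt1 pP; clear; lia.
rewrite (expg_mod P g s) // (expg_mod P g t) // => e.
by apply: inj_mod pP pr _ _ e; apply: ltn_pmod.
Qed.

Lemma geom_sum (R : idomainType) (z : R) P : (z ^+ P = 1 -> z != 1 ->
  \sum_(i < P) z ^+ i = 0)%R.
Proof.
move=> h1 hn; have := subrX1 z P; rewrite h1 subrr => /esym /eqP.
by rewrite mulf_eq0 subr_eq0 (negPf hn) /= => /eqP.
Qed.

Lemma sumA (F : fieldType) P g j (z : F) : prime P -> primitive_root_mod P g ->
  (z ^+ P = 1 -> z != 1 -> \sum_(r < P.-1) z ^+ (g ^ (r + j) %% P) = -1)%R.
Proof.
move=> pP pr z1 zn; have /andP[cg _] := pr; have P0 : 0 < P := prime_gt0 pP.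
pose h (r : 'I_P.-1) : 'I_P := Ordinal (ltn_pmod (g ^ (r + j)) P0).
have hinj : injective h.
  move=> r t /(congr1 val) /= e; apply: val_inj.
  have := @mod_eq P g _ _ pP pr e => /eqP; rewrite eqn_modDr => /eqP.
  by rewrite !modn_small.
pose a0 : 'I_P := Ordinal P0.
have -> : (\sum_(r < P.-1) z ^+ (g ^ (r + j) %% P)
          = \sum_(x in [set h r | r in [set: 'I_P.-1]]) z ^+ x)%R.
  rewrite big_imset /=; last by move=> ? ? _ _; apply: hinj.
  by apply: eq_bigl => r; rewrite in_setT.
have -> : [set h r | r in [set: 'I_P.-1]] = [set~ a0].
  apply/eqP; rewrite eqEcard card_imset // cardsT cardsC1 !card_ord leqnn andbT.
  apply/subsetP => x /imsetP [r _ ->]; rewrite !inE; apply/eqP => /(congr1 val) /= /eqP.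
  rewrite -/(dvdn P _) Euclid_dvdX //; move: cg; rewrite coprime_sym prime_coprime //.
  by move=> /negPf ->.
have := geom_sum _ _ _ z1 zn; rewrite (bigD1 a0) //= expr0 => /eqP.
rewrite addrC addr_eq0 => /eqP <-; apply: eq_bigl => x; by rewrite !inE.
Qed.


Lemma lcm_eq s t m1 m2 : s = t %[mod m1] -> s = t %[mod m2] ->
  s < lcmn m1 m2 -> t < lcmn m1 m2 -> s = t.
Proof.
wlog le: s t / s <= t.
  move=> H e1 e2 sl tl; case: (leqP s t) => h; first exact: H.
  by symmetry; apply: H => //; apply: ltnW.
move=> /eqP e1 /eqP e2 sl tl.
rewrite eq_sym eqn_mod_dvd // in e1; rewrite eq_sym eqn_mod_dvd // in e2.
have : lcmn m1 m2 %| t - s by rewrite dvdn_lcm e1 e2.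
case: (posnP (t - s)) => [h _|h /(dvdn_leq h) hl].
  clear -le h; lia.
move: hl sl tl; generalize (lcmn m1 m2) => L; clear -le; lia.
Qed.

Lemma periodic (R : zmodType) (G : nat -> R) m c e : e = c * m ->
  (\sum_(s < e) G (s %% m)%N = (\sum_(r < m) G r) *+ c)%R.
Proof.
move=> ->; rewrite -(big_mkord xpredT (fun s => G (s %% m)%N)); elim: c => [|c IH].
rewrite mul0n big_geq //.
rewrite mulSnr (big_cat_nat _ (leq_addr _ _)) //= IH mulrSr; congr (_ + _)%R.
rewrite -{1}[c * m]add0n big_addn addKn big_mkord; apply: eq_bigr => i _.
by rewrite addnC modnMDl modn_small.
Qed.

Lemma termC (F : fieldType) (beta : F) d1 d2 k Z Z' : (beta ^+ (d1 * d2) = 1)%R ->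
  Z = Z' %[mod d2] -> (beta ^+ (k * d1 * Z)%N = beta ^+ (k * d1 * Z')%N)%R.
Proof.
move=> h1 e; rewrite -!mulnA -(expr_mod _ h1) -[in RHS](expr_mod _ h1).
by rewrite -modnMmr -[in RHS]modnMmr -!muln_modr e.
Qed.


Lemma H2 g u n2 s j : u = 1 %[mod n2] -> g ^ s * u ^ j = g ^ s %[mod n2].
Proof. by move=> Hu2; rewrite -modnMmr -modnXm Hu2 modnXm exp1n modnMmr muln1. Qed.

Lemma H1 g u n1 s j : u = g %[mod n1] -> g ^ s * u ^ j = g ^ (s + j) %[mod n1].
Proof. by move=> Hu1; rewrite -modnMmr -modnXm Hu1 modnXm modnMmr expnD. Qed.

Lemma reidx (F : fieldType) n1 n2 g u j (G : nat -> F) :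
 prime n1 -> prime n2 -> gcdn n1.-1 n2.-1 = 6 -> primitive_root_mod n1 g ->
 primitive_root_mod n2 g -> u = g %[mod n1] -> u = 1 %[mod n2] ->
 (\sum_(i < n1 * n2 | (i : nat) \in whiteman_D n1 n2 g u j) G i
   = \sum_(s < whit_e n1 n2) G ((g ^ s * u ^ j) %% (n1 * n2))%N)%R.
Proof.
move=> Hn1 Hn2 Hgcd Hg1 Hg2 Hu1 Hu2.
have n0 : 0 < n1 * n2 by rewrite muln_gt0 !prime_gt0.
pose h (s : 'I_(whit_e n1 n2)) : 'I_(n1 * n2) := Ordinal (ltn_pmod (g ^ s * u ^ j) n0).
have eE : whit_e n1 n2 = lcmn n1.-1 n2.-1.
  by rewrite /whit_e !subn1 -(muln_lcm_gcd n1.-1) Hgcd mulnK.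
have hinj : injective h.
  move=> s t /(congr1 val) /= e.
  have d1 : n1 %| n1 * n2 := dvdn_mulr n2 (dvdnn n1).
  have d2 : n2 %| n1 * n2 := dvdn_mull n1 (dvdnn n2).
  have e1 : g ^ (s + j) = g ^ (t + j) %[mod n1].
    by rewrite -(H1 g u n1 s j Hu1) -(H1 g u n1 t j Hu1) -(modn_dvdm (g ^ s * u ^ j) d1)
       -(modn_dvdm (g ^ t * u ^ j) d1) e.
  have e2 : g ^ s = g ^ t %[mod n2].
    by rewrite -(H2 g u n2 s j Hu2) -(H2 g u n2 t j Hu2) -(modn_dvdm (g ^ s * u ^ j) d2)
       -(modn_dvdm (g ^ t * u ^ j) d2) e.
  apply: val_inj; apply: (@lcm_eq _ _ n1.-1 n2.-1); last 2 first.
  - by rewrite -eE ltn_ord.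
  - by rewrite -eE ltn_ord.
  - by have := @mod_eq n1 g _ _ Hn1 Hg1 e1 => /eqP; rewrite eqn_modDr => /eqP.
  - exact: (@mod_eq n2 g _ _ Hn2 Hg2 e2).
rewrite (eq_bigl (fun i => i \in [set h s | s in [set: 'I_(whit_e n1 n2)]])); last first.
  move=> i; rewrite /whiteman_D inE; apply/existsP/imsetP => [[s /eqP e]|[s _ ->]].
    by exists s => //; apply: val_inj.
  by exists s.
rewrite big_imset /=; last by move=> ? ? _ _; apply: hinj.
by apply: eq_bigl => s; rewrite in_setT.
Qed.

Local Open Scope ring_scope.



Theorem lemma3 (n1 n2 g u : nat) (p q : nat) (F : finFieldType) (beta : F)
  (Hn1 : prime n1) (Hn2 : prime n2) (Hodd1 : odd n1) (Hodd2 : odd n2)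
  (Hneq : n1 != n2) (Hgcd : gcdn n1.-1 n2.-1 = 6%N)
  (Hg1 : primitive_root_mod n1 g) (Hg2 : primitive_root_mod n2 g)
  (Hu1 : u = g %[mod n1]) (Hu2 : u = 1 %[mod n2])
  (Hp : prime p) (Hq : exists2 k, (0 < k)%N & q = (p ^ k)%N)
  (Hqn : coprime q (n1 * n2))
  (HF : exists2 m, (0 < m)%N & #|F| = (q ^ m)%N)
  (Hbeta : (n1 * n2).-primitive_root beta) :
  forall j : nat, (j <= 5)%N ->
    (forall a : nat, a \in setN n1 n2 ->
       \sum_(i < n1 * n2 | (i : nat) \in whiteman_D n1 n2 g u j) beta ^+ (a * i)
       = - (((n1 - 1) %/ 6)%:R))
    /\
    (forall a : nat, a \in setN n2 n1 ->
       \sum_(i < n1 * n2 | (i : nat) \in whiteman_D n1 n2 g u j) beta ^+ (a * i)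
       = - (((n2 - 1) %/ 6)%:R)).
Proof.
move=> j _.
have b1 : beta ^+ (n1 * n2) = 1 := prim_expr_order Hbeta.
have d6_1 : (6 %| n1.-1)%N by rewrite -Hgcd dvdn_gcdl.
have d6_2 : (6 %| n2.-1)%N by rewrite -Hgcd dvdn_gcdr.
have /andP[cg1 _] := Hg1; have /andP[cg2 _] := Hg2.
split => a /existsP [k /andP [k0 /eqP ->]].
- rewrite (@reidx _ _ _ _ _ j (fun i : nat => beta ^+ (k * n1 * i)) Hn1 Hn2 Hgcd Hg1 Hg2 Hu1 Hu2).
  pose z := beta ^+ (k * n1).
  rewrite (eq_bigr (fun s : 'I_(whit_e n1 n2) => z ^+ (g ^ ((s %% n2.-1) + 0) %% n2))%N); last first.
    move=> s _; rewrite /z -exprM; apply: termC b1 _.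
    rewrite modn_dvdm ?dvdn_mull // modn_mod addn0 (H2 g u n2 s j Hu2) (expg_mod n2 g s) //.
  have eE : whit_e n1 n2 = ((n1 - 1) %/ 6 * n2.-1)%N.
    by rewrite /whit_e !subn1 divn_mulAC.
  rewrite (@periodic _ (fun r => z ^+ (g ^ (r + 0) %% n2))%N n2.-1 _ _ eE).
  rewrite (sumA _ _ _ _ _ Hn2 Hg2) ?mulNrn //.
    by rewrite /z -exprM -mulnA mulnC exprM b1 expr1n.
  rewrite /z -(prim_order_dvd Hbeta) [(n1 * n2)%N]mulnC dvdn_pmul2r ?prime_gt0 //.
  by apply/negP => /(dvdn_leq k0); rewrite leqNgt ltn_ord.
- rewrite (@reidx _ _ _ _ _ j (fun i : nat => beta ^+ (k * n2 * i)) Hn1 Hn2 Hgcd Hg1 Hg2 Hu1 Hu2).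
  pose z := beta ^+ (k * n2).
  have b2 : beta ^+ (n2 * n1) = 1 by rewrite mulnC.
  rewrite (eq_bigr (fun s : 'I_(whit_e n1 n2) => z ^+ (g ^ ((s %% n1.-1) + j) %% n1))%N); last first.
    move=> s _; rewrite /z -exprM; apply: termC b2 _.
    rewrite modn_dvdm ?dvdn_mulr // modn_mod (H1 g u n1 s j Hu1) (expg_mod n1 g (s + j)) //.
    by rewrite (expg_mod n1 g (s %% n1.-1 + j)) // modnDml.
  have eE : whit_e n1 n2 = ((n2 - 1) %/ 6 * n1.-1)%N.
    by rewrite /whit_e mulnC !subn1 divn_mulAC.
  rewrite (@periodic _ (fun r => z ^+ (g ^ (r + j) %% n1))%N n1.-1 _ _ eE).
  rewrite (sumA _ _ _ _ _ Hn1 Hg1) ?mulNrn //.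
    by rewrite /z -exprM -mulnA [(n2 * n1)%N]mulnC mulnC exprM b1 expr1n.
  rewrite /z -(prim_order_dvd Hbeta) dvdn_pmul2r ?prime_gt0 //.
  by apply/negP => /(dvdn_leq k0); rewrite leqNgt ltn_ord.
Qed.
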